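(* Let $U\trianglelefteq S\le W$ and $R=(U\times U)\langle\sigma\rangle\{(s,s):s\in S\}$. Then \[N_W(R)=(V\times V)\langle\sigma\rangle\{(t,t):t\in T\},\] where $V=\Omega(S,U)$ and $T=N_W(U)\cap N_W(S)$. Furthermore $V$ is a normal subgroup of $T$, $[V\times V,R]\le(U\times U)\{(v,v):v\in V\}$, the quotient $V/U$ is a $T/S$-module, and $N_W(R)/R\cong(V/U)(T/S)$.
   Context: $W$ is the isometry group of the binary rooted tree $\{0,1\}^*$. Elements are written $(g_0,g_1)\pi$ with $\pi\in\mathrm{Sym}(\{0,1\})$, meaning $(xw)\mapsto x^\pi w^{g_x}$; $\sigma$ is the isometry swapping the two subtrees at the root rigidly; $U\times U=\{(u,u'):u,u'\in U\}$. For groups $K\trianglelefteq G$, $\Omega(G,K)=\{v\in G: v^2\in K\text{ and }[G,v]\le K\}$. The notation $(V/U)(T/S)$ denotes a product of (a group isomorphic to) $V/U$ with (a group isomorphic to) $T/S$, as in the paper. *)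

(* Defs.v *)
From mathcomp Require Import all_boot.
Set Implicit Arguments. Unset Strict Implicit. Unset Printing Implicit Defensive.

(* ---------- The group W of isometries of the binary rooted tree ----------
   An isometry g of {0,1}^* (rooted, so it fixes the root) is encoded by its
   portrait: for every vertex v, the bit g v tells whether g swaps the two
   children of v.  Vertices are words in seq bool (false = 0, true = 1).
   The action of g on vertices ([act g]) realises the recursion
   (g_0,g_1)pi : x w |-> x^pi w^(g_x), with pi = swap iff g [::] and
   g_x = sect g x.  This correspondence portrait <-> isometry is a bijection;
   equality of elements of W is (extensional) equality of portraits. *)
Definition W := seq bool -> bool.

Definition sect (g : W) (x : bool) : W := fun v => g (x :: v).

Fixpoint act (g : W) (w : seq bool) : seq bool :=
  match w with
  | [::] => [::]
  | x :: w' => (x (+) g [::]) :: act (sect g x) w'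
  end.

(* Right actions: w^(g*h) = (w^g)^h, i.e. act (mul g h) = act h \o act g. *)
Definition mul (g h : W) : W := fun v => g v (+) h (act g v).

Fixpoint inv_at (g : W) (v : seq bool) : bool :=
  match v with
  | [::] => g [::]
  | x :: v' => inv_at (sect g (x (+) g [::])) v'
  end.
Definition inv (g : W) : W := inv_at g.

Definition one : W := fun _ => false.

(* sigma: swaps the two subtrees at the root rigidly. *)
Definition sigma : W := fun v => if v is [::] then true else false.

(* (g0, g1) : acts as g0 on the subtree 0{0,1}^* and g1 on 1{0,1}^*. *)
Definition pairW (g0 g1 : W) : W :=
  fun v => match v with
           | [::] => false
           | x :: v' => if x then g1 v' else g0 v'
           end.

Definition wset := W -> Prop.

Definition subset (A B : wset) : Prop := forall g, A g -> B g.
Definition seteq (A B : wset) : Prop := forall g, A g <-> B g.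
Definition setI (A B : wset) : wset := fun g => A g /\ B g.

Definition subgroup (H : wset) : Prop :=
  H one /\ (forall x y, H x -> H y -> H (mul x y)) /\ (forall x, H x -> H (inv x)).

Definition conj (x g : W) : W := mul (mul (inv g) x) g.

Definition normalizer (H : wset) : wset := fun g => forall x, H x <-> H (conj x g).

Definition normal (K H : wset) : Prop :=
  subgroup K /\ subgroup H /\ subset K H /\ subset H (normalizer K).

Definition gen (X : wset) : wset :=
  fun g => forall K, subgroup K -> subset X K -> K g.

Definition comm (x y : W) : W := mul (mul (inv x) (inv y)) (mul x y).

Definition commg (A B : wset) : wset :=
  gen (fun g => exists a b, A a /\ B b /\ g = comm a b).

Definition Omega (G K : wset) : wset :=
  fun v => G v /\ K (mul v v) /\ subset (commg G (fun w => w = v)) K.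

Definition prodset (A B : wset) : wset :=
  fun g => exists a b, A a /\ B b /\ g = mul a b.

Definition dprodW (U U' : wset) : wset :=
  fun g => exists u u', U u /\ U' u' /\ g = pairW u u'.

Definition diagW (S : wset) : wset := fun g => exists s, S s /\ g = pairW s s.

Definition sigma_grp : wset := gen (fun g => g = sigma).

(* H/K ~= H'/K' (K normal in H, K' normal in H'): a map f : H -> H' inducing
   an isomorphism of the quotient groups, i.e. f is a homomorphism modulo K',
   its kernel modulo K' is exactly K, and it is onto modulo K'. *)
Definition quot_iso (H K H' K' : wset) : Prop :=
  normal K H /\ normal K' H' /\
  exists f : W -> W,
    (forall x, H x -> H' (f x)) /\
    (forall x y, H x -> H y -> K' (mul (f (mul x y)) (inv (mul (f x) (f y))))) /\
    (forall x, H x -> (K' (f x) <-> K x)) /\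
    (forall y, H' y -> exists x, H x /\ K' (mul (f x) (inv y))).

(* V/U is a T/S-module (via conjugation): U, S normal in T, U normal in V,
   V normal in T (so T acts on V/U), V/U abelian, and S acts trivially on
   V/U (so the action factors through T/S). *)
Definition quot_module (V U T S : wset) : Prop :=
  normal U V /\ normal V T /\ subset T (normalizer U) /\ normal S T /\
  subset (commg V V) U /\ subset (commg S V) U.

(* Main.v *)
Require Import Defs.
From Stdlib Require Import FunctionalExtensionality.
From mathcomp Require Import all_boot.
Require Import Defs.
Set Implicit Arguments. Unset Strict Implicit. Unset Printing Implicit Defensive.

Local Notation "x ** y" := (mul x y) (at level 40, left associativity).

Lemma sect_mul g h x : sect (g ** h) x = sect g x ** sect h (x (+) g [::]).
Proof. by apply: functional_extensionality => v. Qed.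

Lemma act_mul g h w : act (g ** h) w = act h (act g w).
Proof.
elim: w g h => [|x w IH] g h //=.
by rewrite sect_mul IH addbA.
Qed.

Lemma mulA f g h : f ** (g ** h) = f ** g ** h.
Proof.
apply: functional_extensionality => v.
by rewrite /mul act_mul addbA.
Qed.

Lemma mulA' f g h : f ** g ** h = f ** (g ** h).
Proof. by rewrite mulA. Qed.

Lemma act_one w : act one w = w.
Proof. by elim: w => //= x w ->; rewrite addbF. Qed.

Lemma mul1g g : one ** g = g.
Proof. by apply: functional_extensionality => v; rewrite /mul act_one. Qed.

Lemma mulg1 g : g ** one = g.
Proof. by apply: functional_extensionality => v; rewrite /mul addbF. Qed.

Lemma inv_act g v : inv g (act g v) = g v.
Proof.
elim: v g => [|x v IH] g //=.
rewrite addbK; exact: IH.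
Qed.

Lemma act_inv g v : g (act (inv g) v) = inv g v.
Proof.
elim: v g => [|x v IH] g //=.
exact: (IH (sect g (x (+) g [::]))).
Qed.

Lemma mulgV g : g ** inv g = one.
Proof. by apply: functional_extensionality => v; rewrite /mul inv_act addbb. Qed.

Lemma mulVg g : inv g ** g = one.
Proof. by apply: functional_extensionality => v; rewrite /mul act_inv addbb. Qed.

Lemma mulKV x y : x ** (inv x ** y) = y.
Proof. by rewrite mulA mulgV mul1g. Qed.
Lemma mulVK x y : inv x ** (x ** y) = y.
Proof. by rewrite mulA mulVg mul1g. Qed.

Lemma inv_uniq x y : x ** y = one -> inv x = y.
Proof. by move=> h; rewrite -[inv x]mulg1 -h mulVK. Qed.

Lemma invK x : inv (inv x) = x.
Proof. by apply: inv_uniq; rewrite mulVg. Qed.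
Lemma invM x y : inv (x ** y) = inv y ** inv x.
Proof. by apply: inv_uniq; rewrite mulA' mulKV mulgV. Qed.
Lemma inv1 : inv one = one.
Proof. by apply: inv_uniq; rewrite mulg1. Qed.

Ltac gsimpl := rewrite /conj /comm; repeat first [rewrite invM | rewrite invK | rewrite inv1 | rewrite mulA' | rewrite mulKV | rewrite mulVK | rewrite mulgV | rewrite mulVg | rewrite mul1g | rewrite mulg1].

Definition sig (e : bool) : W := if e then sigma else one.

Lemma sect_pair a b x : sect (pairW a b) x = if x then b else a.
Proof. by case: x. Qed.

Lemma sect_sig e x : sect (sig e) x = one.
Proof. by case: e. Qed.

Lemma pmul a b c d : pairW a b ** pairW c d = pairW (a ** c) (b ** d).
Proof.
apply: functional_extensionality => -[|x v] //=; rewrite /mul /=.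
by rewrite addbF; case: x.
Qed.

Lemma pone : pairW one one = one.
Proof. by apply: functional_extensionality => -[|[] v]. Qed.

Lemma pinv a b : inv (pairW a b) = pairW (inv a) (inv b).
Proof. by apply: inv_uniq; rewrite pmul !mulgV pone. Qed.

Lemma sigsig e : sig e ** sig e = one.
Proof.
case: e => /=; last by rewrite mulg1.
by apply: functional_extensionality => -[|x v].
Qed.

Lemma sigswap e a b : sig e ** pairW a b = pairW (if e then b else a) (if e then a else b) ** sig e.
Proof.
case: e => /=; last by rewrite mul1g mulg1.
apply: functional_extensionality => -[|x v] //=; rewrite /mul /= act_one.
by case: x; rewrite /= addbF.
Qed.

Lemma decomp g : g = pairW (sect g false) (sect g true) ** sig (g [::]).
Proof.
apply: functional_extensionality => -[|x v]; rewrite /mul /=.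
  by case: (g [::]).
by case: (g [::]); case: x; rewrite /= addbF.
Qed.

Lemma pair_inj a b c d : pairW a b = pairW c d -> a = c /\ b = d.
Proof.
move=> h; split; apply: functional_extensionality => v.
  exact: (f_equal (fun f => f (false :: v)) h).
exact: (f_equal (fun f => f (true :: v)) h).
Qed.

Lemma sect_pairsig a b e x : sect (pairW a b ** sig e) x = if x then b else a.
Proof. by rewrite sect_mul sect_sig mulg1 sect_pair. Qed.

Lemma sect_inv g x : sect (inv g) x = inv (sect g (x (+) g [::])).
Proof. by []. Qed.
Lemma inv_root g : inv g [::] = g [::].
Proof. by []. Qed.
Lemma mul_root g h : (g ** h) [::] = g [::] (+) h [::].
Proof. by []. Qed.
Lemma one_root : one [::] = false. Proof. by []. Qed.

Lemma sg1 H : subgroup H -> H one. Proof. by case. Qed.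
Lemma sgM H x y : subgroup H -> H x -> H y -> H (x ** y).
Proof. by case=> _ [h _]; apply: h. Qed.
Lemma sgV H x : subgroup H -> H x -> H (inv x).
Proof. by case=> _ [_ h]; apply: h. Qed.
Lemma sgVr H x : subgroup H -> H (inv x) -> H x.
Proof. by move=> hH /(sgV hH); rewrite invK. Qed.
Lemma sg_conj H x g : subgroup H -> H x -> H g -> H (conj x g).
Proof. by move=> hH hx hg; rewrite /conj; apply: sgM => //; apply: sgM => //; apply: sgV. Qed.

Lemma norm_conj H g x : normalizer H g -> H x -> H (conj x g).
Proof. by move=> h /h. Qed.
Lemma norm_conjV H g x : normalizer H g -> H x -> H (conj x (inv g)).
Proof.
move=> h hx; apply/h.
have -> : conj (conj x (inv g)) g = x by gsimpl.
exact: hx.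
Qed.
Lemma norm_inv H g : normalizer H g -> normalizer H (inv g).
Proof.
move=> h x; split; first exact: norm_conjV.
move/(norm_conj h).
have -> : conj (conj x (inv g)) g = x by gsimpl.
by [].
Qed.
Lemma norm_mul H g h : normalizer H g -> normalizer H h -> normalizer H (g ** h).
Proof.
move=> hg hh x.
have -> : conj x (g ** h) = conj (conj x g) h by gsimpl.
split; first by move/(iffLR (hg _))/(iffLR (hh _)).
by move/(iffRL (hh _))/(iffRL (hg _)).
Qed.
Lemma norm_one H : normalizer H one.
Proof. by move=> x; have -> : conj x one = x by gsimpl. Qed.
Lemma norm_sg H : subgroup (normalizer H).
Proof.
split; first exact: norm_one.
by split; [move=> x y; apply: norm_mul | move=> x; apply: norm_inv].
Qed.
Lemma sg_norm H : subgroup H -> subset H (normalizer H).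
Proof.
move=> hH g hg x; split; first by move=> hx; apply: sg_conj.
move=> hx.
have -> : x = conj (conj x g) (inv g) by gsimpl.
by apply: sg_conj => //; apply: sgV.
Qed.

Lemma gen_sub X K : subgroup K -> subset X K -> subset (gen X) K.
Proof. by move=> hK hXK g; apply. Qed.
Lemma gen_in X g : X g -> gen X g.
Proof. by move=> hg K _; apply. Qed.

Lemma sigma_inv : inv sigma = sigma.
Proof. by apply: inv_uniq; apply: (sigsig true). Qed.

Lemma sigma_grpE g : sigma_grp g <-> exists e, g = sig e.
Proof.
split.
  move=> h; apply: (h (fun g => exists e, g = sig e)).
    split; first by exists false.
    split.
      move=> x y [e ->] [f ->]; exists (e (+) f).
      by case: e; case: f => /=; rewrite ?mulg1 ?mul1g //; apply: (sigsig true).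
    by move=> x [e ->]; exists e; case: e => /=; rewrite ?sigma_inv ?inv1.
  by move=> x ->; exists true.
case=> e ->; case: e => /=; first by apply: gen_in.
by move=> K hK _; apply: sg1.
Qed.

Definition CP (X Y : wset) : wset := fun g =>
  X (sect g false) /\ X (sect g true) /\ Y (sect g false ** inv (sect g true)).

Lemma CP_ps X Y a b e : CP X Y (pairW a b ** sig e) <-> X a /\ X b /\ Y (a ** inv b).
Proof. by rewrite /CP !sect_pairsig. Qed.
Lemma CP_p X Y a b : CP X Y (pairW a b) <-> X a /\ X b /\ Y (a ** inv b).
Proof. by rewrite /CP !sect_pair. Qed.

Lemma CP_sub X Y X' Y' : subset X X' -> subset Y Y' -> subset (CP X Y) (CP X' Y').
Proof. by move=> h1 h2 g [a [b c]]; split; [|split]; auto. Qed.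

Lemma CP_sg X Y : subgroup X -> subgroup Y -> subset Y X -> subset X (normalizer Y) ->
  subgroup (CP X Y).
Proof.
move=> hX hY hYX hXN; split.
  have E : forall x, sect one x = one by [].
  by rewrite /CP !E inv1 mulg1; split; [|split]; apply: sg1.
split.
  move=> g h [g0 [g1 gY]] [h0 [h1 hhY]].
  rewrite /CP !sect_mul; case: (g [::]) => /=; (split; [|split]; try by apply: sgM).
    have -> : sect g false ** sect h true ** inv (sect g true ** sect h false) =
      (sect g false ** inv (sect g true)) ** conj (inv (sect h false ** inv (sect h true))) (inv (sect g true)) by gsimpl.
    apply: sgM => //; apply: norm_conjV; first by apply: hXN.
    exact: sgV hhY.
  have -> : sect g false ** sect h false ** inv (sect g true ** sect h true) =
    (sect g false ** inv (sect g true)) ** conj (sect h false ** inv (sect h true)) (inv (sect g true)) by gsimpl.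
  apply: sgM => //; apply: norm_conjV; first by apply: hXN.
  exact: hhY.
move=> g [g0 [g1 gY]].
rewrite /CP !sect_inv; case: (g [::]) => /=; (split; [|split]; try by apply: sgV).
  rewrite invK.
  have -> : inv (sect g true) ** sect g false = conj (sect g false ** inv (sect g true)) (sect g true) by gsimpl.
  by apply: norm_conj => //; apply: hXN.
rewrite invK.
have -> : inv (sect g false) ** sect g true = conj (inv (sect g false ** inv (sect g true))) (sect g false) by gsimpl.
by apply: norm_conj; [apply: hXN | apply: sgV].
Qed.

Definition PS (A B : wset) : wset := prodset (prodset (dprodW A A) sigma_grp) (diagW B).

Lemma PS_CP A B : subgroup A -> subgroup B -> subset A B -> subset B (normalizer A) ->
  seteq (PS A B) (CP B A).
Proof.
move=> hA hB hAB hBN g; split.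
  case=> x [b' [[p [s [[a [a' [ha [ha' ->]]]] [/sigma_grpE [e ->] ->]]] [[b [hb ->]] ->]]]].
  have hC := CP_sg hB hA hAB hBN.
  apply: sgM => //; last by apply/CP_p; split; [|split] => //; rewrite mulgV; apply: sg1.
  apply: sgM => //; last by rewrite -[sig e]mul1g -pone; apply/CP_ps; split; [|split]; rewrite ?inv1 ?mulg1; apply: sg1.
  by apply/CP_p; split; [|split]; auto; apply: sgM => //; apply: sgV.
case=> g0 [g1 gA].
exists (pairW (sect g false ** inv (sect g true)) one ** sig (g [::])), (pairW (sect g true) (sect g true)).
split.
  exists (pairW (sect g false ** inv (sect g true)) one), (sig (g [::])).
  split; first by exists (sect g false ** inv (sect g true)), one; split => //; split => //; apply: sg1.
  by split => //; apply/sigma_grpE; exists (g [::]).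
split; first by exists (sect g true).
rewrite [in LHS](decomp g) mulA' sigswap; case: (g [::]); rewrite mulA pmul mul1g; gsimpl; by [].
Qed.
Set Implicit Arguments. Unset Strict Implicit. Unset Printing Implicit Defensive.


Lemma Vchar U S v : subgroup U ->
  Omega S U v <-> S v /\ U (v ** v) /\ forall s, S s -> U (comm s v).
Proof.
move=> hU; split.
  case=> hv [hvv hc]; split => //; split => // s hs.
  apply: hc; apply: gen_in; by exists s, v.
case=> hv [hvv hc]; split => //; split => //.
apply: gen_sub => // g [a [b [ha [-> ->]]]]; exact: hc.
Qed.

Lemma S_T U S : normal U S -> subset S (setI (normalizer U) (normalizer S)).
Proof. by case=> hU [hS [hUS hSN]] g hg; split; [apply: hSN | apply: sg_norm]. Qed.

Lemma T_sg U S : subgroup (setI (normalizer U) (normalizer S)).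
Proof.
split; first by split; apply: norm_one.
split.
  by move=> x y [? ?] [? ?]; split; apply: norm_mul.
by move=> x [? ?]; split; apply: norm_inv.
Qed.

Lemma V_S U S : normal U S -> subset (Omega S U) S.
Proof. by move=> _ g []. Qed.

Lemma U_V U S : normal U S -> subset U (Omega S U).
Proof.
case=> hU [hS [hUS hSN]] u hu; apply/Vchar => //; split; first exact: hUS.
split; first exact: sgM.
move=> s hs.
have -> : comm s u = conj (inv u) s ** u by gsimpl.
apply: sgM => //; apply: norm_conj; [exact: hSN | exact: sgV].
Qed.

Lemma V_sg U S : normal U S -> subgroup (Omega S U).
Proof.
move=> hN; have [hU [hS [hUS hSN]]] := hN.
split; first exact: (U_V hN (sg1 hU)).
split.
  move=> v w /(Vchar _ _ hU) [hv [hvv hcv]] /(Vchar _ _ hU) [hw [hww hcw]].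
  apply/Vchar => //; split; first exact: sgM.
  split.
    have -> : v ** w ** (v ** w) = v ** v ** (conj (comm w v) (inv w) ** (w ** w)) by gsimpl.
    apply: sgM => //; apply: sgM => //; apply: norm_conjV; [exact: hSN | exact: hcv].
  move=> s hs.
  have -> : comm s (v ** w) = comm s w ** conj (comm s v) w by gsimpl.
  apply: sgM; [done | exact: hcw |]; apply: norm_conj; [exact: hSN | exact: hcv].
move=> v /(Vchar _ _ hU) [hv [hvv hcv]].
apply/Vchar => //; split; first exact: sgV.
split; first by rewrite -invM; apply: sgV.
move=> s hs.
have -> : comm s (inv v) = conj (inv (comm s v)) (inv v) by gsimpl.
apply: norm_conjV; [exact: hSN | apply: sgV => //; exact: hcv].
Qed.

Lemma V_conjT U S t x : normal U S -> setI (normalizer U) (normalizer S) t ->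
  Omega S U x -> Omega S U (conj x t).
Proof.
move=> hN [tU tS]; have [hU [hS [hUS hSN]]] := hN.
move=> /(Vchar _ _ hU) [hx [hxx hcx]].
apply/Vchar => //; split; first exact: norm_conj.
split.
  have -> : conj x t ** conj x t = conj (x ** x) t by gsimpl.
  exact: norm_conj.
move=> s hs.
have -> : comm s (conj x t) = conj (comm (conj s (inv t)) x) t by gsimpl.
apply: norm_conj => //; apply: hcx; exact: norm_conjV.
Qed.

Lemma V_normal U S : normal U S ->
  normal (Omega S U) (setI (normalizer U) (normalizer S)).
Proof.
move=> hN; split; first exact: V_sg.
split; first exact: T_sg.
split; first by move=> g /(V_S hN) /(S_T hN).
move=> t ht x; split; first exact: V_conjT.
move=> hx.
have -> : x = conj (conj x t) (inv t) by gsimpl.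
apply: V_conjT => //; exact: (sgV (@T_sg U S)).
Qed.

Lemma pconj x y a b : conj (pairW x y) (pairW a b) = pairW (conj x a) (conj y b).
Proof. by rewrite /conj pinv !pmul. Qed.

Lemma conj1 g : conj one g = one.
Proof. by gsimpl. Qed.

Lemma main_fwd U S a b : normal U S -> normalizer (CP S U) (pairW a b) ->
  setI (normalizer U) (normalizer S) a /\ setI (normalizer U) (normalizer S) b /\
  Omega S U (a ** inv b).
Proof.
move=> hN hh; have [hU [hS [hUS hSN]]] := hN.
have f1 : forall x, S x -> S (conj x a) /\ S (conj x b) /\ U (conj x a ** inv (conj x b)).
  move=> x hx; apply: (iffLR (CP_p S U (conj x a) (conj x b))); rewrite -pconj; apply/(iffLR (hh _)); apply: (iffRL (CP_p _ _ _ _)).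
  by rewrite mulgV; split; [|split] => //; apply: sg1.
have f2 : forall x, U x -> U (conj x a) /\ U (conj x b).
  move=> x hx; split.
    have := iffLR (hh (pairW x one)).
    rewrite pconj conj1 => /(_ _)/(iffLR (CP_p _ _ _ _)) [] //; first by apply: (iffRL (CP_p _ _ _ _)); rewrite inv1 mulg1; split; [|split]; auto; apply: sg1.
    by move=> _ [_]; rewrite inv1 mulg1.
  have := iffLR (hh (pairW one x)).
  rewrite pconj conj1 => /(_ _)/(iffLR (CP_p _ _ _ _)) [] //; first by apply: (iffRL (CP_p _ _ _ _)); rewrite mul1g; split; [|split]; auto; [apply: sg1 | apply: sgV].
  by move=> _ [_]; rewrite mul1g => /(sgVr hU).
have f4 : forall x, U (conj x a) -> U x.
  move=> x hx.
  have := iffRL (hh (pairW x one)).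
  rewrite pconj conj1 => /(_ _)/(iffLR (CP_p _ _ _ _)) [] //; first by apply: (iffRL (CP_p _ _ _ _)); rewrite inv1 mulg1; split; [|split]; auto; apply: sg1.
  by move=> _ [_]; rewrite inv1 mulg1.
have f5 : forall x, U (conj x b) -> U x.
  move=> x hx.
  have := iffRL (hh (pairW one x)).
  rewrite pconj conj1 => /(_ _)/(iffLR (CP_p _ _ _ _)) [] //; first by apply: (iffRL (CP_p _ _ _ _)); rewrite mul1g; split; [|split]; auto; [apply: sg1 | apply: sgV].
  by move=> _ [_]; rewrite mul1g => /(sgVr hU).
have f6 : forall x, S (conj x a) -> S x.
  move=> x hx.
  have := iffRL (hh (pairW x (conj (conj x a) (inv b)))).
  rewrite pconj => /(_ _)/(iffLR (CP_p _ _ _ _)) [] //.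
  have -> : conj (conj (conj x a) (inv b)) b = conj x a by gsimpl.
  by apply: (iffRL (CP_p _ _ _ _)); rewrite mulgV; split; [|split] => //; apply: sg1.
have f7 : forall x, S (conj x b) -> S x.
  move=> x hx.
  have := iffRL (hh (pairW (conj (conj x b) (inv a)) x)).
  rewrite pconj => /(_ _)/(iffLR (CP_p _ _ _ _)) [] //.
    have -> : conj (conj (conj x b) (inv a)) a = conj x b by gsimpl.
    by apply: (iffRL (CP_p _ _ _ _)); rewrite mulgV; split; [|split] => //; apply: sg1.
  by move=> _ [].
have f8 : S (inv a ** b) /\ S (inv b ** a) /\ U ((inv a ** b) ** inv (inv b ** a)).
  apply/(CP_ps _ _ _ _ true).
  have <- : conj sigma (pairW a b) = pairW (inv a ** b) (inv b ** a) ** sig true.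
    rewrite /conj pinv.
    have -> : sigma = sig true by [].
    by rewrite !mulA' (sigswap true) /= !mulA !pmul.
  apply/(iffLR (hh _)).
  have -> : sigma = pairW one one ** sig true by rewrite pone mul1g.
  by apply/CP_ps; rewrite inv1 mulg1; split; [|split]; apply: sg1.
have Na : normalizer U a by move=> x; split; [move/f2 => [] | move/f4].
have Nb : normalizer U b by move=> x; split; [move/f2 => [] | move/f5].
have NSa : normalizer S a by move=> x; split; [move/f1 => [] | move/f6].
have NSb : normalizer S b by move=> x; split; [move/f1 => [_ []] | move/f7].
split; first by split.
split; first by split.
have [f8a [f8b f8c]] := f8.
apply/Vchar => //; split.
  have -> : a ** inv b = conj (inv (inv a ** b)) (inv a) by gsimpl.
  by apply: norm_conjV => //; apply: sgV.
split.
  have -> : a ** inv b ** (a ** inv b) = conj (inv ((inv a ** b) ** inv (inv b ** a))) (inv a) by gsimpl.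
  by apply: norm_conjV => //; apply: sgV.
move=> s hs.
have [_ [_ hm]] := f1 _ (sgV hS hs).
have -> : comm s (a ** inv b) = inv (conj (conj (inv s) a ** inv (conj (inv s) b)) (inv b)) by gsimpl.
by apply: sgV => //; apply: norm_conjV.
Qed.

Lemma main_bwd U S a b : normal U S ->
  setI (normalizer U) (normalizer S) a -> setI (normalizer U) (normalizer S) b ->
  Omega S U (a ** inv b) ->
  forall r, CP S U r -> CP S U (conj r (pairW a b)).
Proof.
move=> hN [Ua Sa] [Ub Sb] hw; have [hU [hS [hUS hSN]]] := hN.
have [wS [wU wc]] := iffLR (Vchar _ _ hU) hw.
move=> r; rewrite (decomp r); set r0 := sect r false; set r1 := sect r true.
move=> /(iffLR (CP_ps _ _ _ _ _)) [h0 [h1 h01]].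
case: (r [::]).
  have -> : conj (pairW r0 r1 ** sig true) (pairW a b) =
     pairW (inv a ** r0 ** b) (inv b ** r1 ** a) ** sig true.
    by rewrite /conj pinv !mulA' (sigswap true) /= !mulA !pmul.
  apply: (iffRL (CP_ps _ _ _ _ _)); split; [|split].
  - have -> : inv a ** r0 ** b = conj r0 a ** inv (conj (a ** inv b) b) by gsimpl.
    apply: sgM => //; first exact: norm_conj.
    by apply: sgV => //; apply: norm_conj.
  - have -> : inv b ** r1 ** a = conj r1 b ** conj (a ** inv b) b by gsimpl.
    by apply: sgM => //; apply: norm_conj.
  have -> : inv a ** r0 ** b ** inv (inv b ** r1 ** a) =
    conj ((r0 ** inv r1) ** comm (inv r1) (a ** inv b) ** inv ((a ** inv b) ** (a ** inv b))) a by gsimpl.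
  apply: norm_conj => //; apply: sgM => //; last exact: sgV.
  by apply: sgM => //; apply: wc; apply: sgV.
rewrite /= mulg1 pconj; apply: (iffRL (CP_p _ _ _ _)); split; [|split].
- exact: norm_conj.
- exact: norm_conj.
have -> : conj r0 a ** inv (conj r1 b) =
  conj (conj (comm r0 (a ** inv b)) (inv r0) ** (r0 ** inv r1)) b by gsimpl.
apply: norm_conj => //; apply: sgM => //.
by apply: norm_conjV; [apply: hSN | apply: wc].
Qed.

Lemma maps_norm X h : (forall r, X r -> X (conj r h)) -> (forall r, X r -> X (conj r (inv h))) ->
  normalizer X h.
Proof.
move=> h1 h2 x; split; first exact: h1.
move/h2; have -> : conj (conj x h) (inv h) = x by gsimpl.
by [].
Qed.

Lemma sig_CP X Y e : subgroup X -> subgroup Y -> CP X Y (sig e).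
Proof.
move=> hX hY; rewrite -[sig e]mul1g -pone; apply: (iffRL (CP_ps _ _ _ _ _)).
by rewrite inv1 mulg1; split; [|split]; apply: sg1.
Qed.

Lemma NR_CP U S : normal U S ->
  seteq (normalizer (CP S U)) (CP (setI (normalizer U) (normalizer S)) (Omega S U)).
Proof.
move=> hN; have [hU [hS [hUS hSN]]] := hN.
have hC : subgroup (CP S U) := CP_sg hS hU hUS hSN.
move=> g; split.
  move=> hg.
  have : normalizer (CP S U) (pairW (sect g false) (sect g true)).
    have -> : pairW (sect g false) (sect g true) = g ** sig (g [::]).
      have E := decomp g; set e := g [::] in E *.
      by rewrite [in RHS]E mulA' sigsig mulg1.
    apply: norm_mul => //; apply: sg_norm => //; exact: sig_CP.
  by move/(main_fwd hN).
case=> g0 [g1 gV].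
rewrite (decomp g); apply: norm_mul; last by apply: sg_norm => //; exact: sig_CP.
apply: maps_norm; first exact: main_bwd.
rewrite pinv; apply: main_bwd => //; try exact: (sgV (@T_sg U S)).
have -> : inv (sect g false) ** inv (inv (sect g true)) =
  conj (inv (sect g false ** inv (sect g true))) (sect g false) by gsimpl.
apply: V_conjT => //; exact: (sgV (V_sg hN)).
Qed.

Lemma sigma_swap a b : sigma ** pairW a b = pairW b a ** sigma.
Proof. exact: (sigswap true). Qed.
Lemma sigma_sigma : sigma ** sigma = one.
Proof. exact: (sigsig true). Qed.

Lemma comm_pair0 v v' r0 r1 :
  comm (pairW v v') (pairW r0 r1 ** sig false) = pairW (comm v r0) (comm v' r1).
Proof. by rewrite /= mulg1 /comm !pinv !pmul. Qed.

Lemma comm_pair1 v v' r0 r1 :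
  comm (pairW v v') (pairW r0 r1 ** sig true) =
  pairW (inv v ** conj v' r1) (inv v' ** conj v r0).
Proof.
rewrite /= /comm /conj !invM !pinv sigma_inv.
rewrite !mulA' (mulA (pairW v v')) pmul (mulA (pairW (inv r0) _)) pmul.
rewrite (mulA sigma) sigma_swap mulA' sigma_sigma mulg1 pmul.
by rewrite ?mulA'.
Qed.

Lemma sg_seteq A B : seteq A B -> subgroup B -> subgroup A.
Proof.
move=> E [h1 [h2 h3]]; split; first by apply/E.
split; first by move=> x y /E hx /E hy; apply/E; apply: h2.
by move=> x /E hx; apply/E; apply: h3.
Qed.

Lemma norm_seteq A B : seteq A B -> seteq (normalizer A) (normalizer B).
Proof.
move=> E g; split => h x.
  split => hx.
    by apply/E; apply/(iffLR (h x)); apply/E.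
  by apply/E; apply/(iffRL (h x)); apply/E.
split => hx.
  by apply/E; apply/(iffLR (h x)); apply/E.
by apply/E; apply/(iffRL (h x)); apply/E.
Qed.

Lemma QI H K H' K' (f : W -> W) : normal K H -> normal K' H' ->
  (forall x, H x -> H' (f x)) ->
  (forall x y, f (x ** y) = f x ** f y) ->
  (forall x, H x -> (K' (f x) <-> K x)) ->
  (forall y, H' y -> exists x r, H x /\ K' r /\ y = f x ** r) ->
  quot_iso H K H' K'.
Proof.
move=> hKH hKH' hf hm hk ho; split => //; split => //; exists f.
have [hK' [hH' [hKs hHN]]] := hKH'.
split => //; split.
  by move=> x y _ _; rewrite hm mulgV; apply: sg1.
split => // y hy.
have [x [r [hx [hr ->]]]] := ho y hy.
exists x; split => //.
have -> : f x ** inv (f x ** r) = conj (inv r) (inv (f x)) by gsimpl.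
by apply: norm_conjV; [apply: hHN; apply: hf | apply: sgV].
Qed.

Lemma comm_claim U S : normal U S ->
  subset (commg (dprodW (Omega S U) (Omega S U)) (PS U S))
         (prodset (dprodW U U) (diagW (Omega S U))).
Proof.
move=> hN; have [hU [hS [hUS hSN]]] := hN.
have hV := V_sg hN.
have hR := PS_CP hU hS hUS hSN.
have VN : forall v, Omega S U v -> normalizer U v by move=> v /(V_S hN) /hSN.
pose Q := fun g => exists x y, g = pairW x y /\ Omega S U x /\ Omega S U y /\ U (x ** inv y).
have QQ : subset Q (prodset (dprodW U U) (diagW (Omega S U))).
  move=> g [x [y [-> [hx [hy hxy]]]]].
  exists (pairW (x ** inv y) one), (pairW y y); split.
    by exists (x ** inv y), one; split => //; split => //; apply: sg1.
  split; first by exists y.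
  by rewrite pmul; gsimpl.
move=> g hg; apply: QQ; move: g hg; apply: gen_sub.
  split; first by exists one, one; rewrite pone; split => //; rewrite inv1 mulg1; split; [|split]; apply: sg1.
  split.
    move=> g h [x [y [-> [hx [hy hxy]]]]] [x' [y' [-> [hx' [hy' hxy']]]]].
    exists (x ** x'), (y ** y'); split; first by rewrite pmul.
    split; first exact: sgM.
    split; first exact: sgM.
    have -> : x ** x' ** inv (y ** y') = (x ** inv y) ** conj (x' ** inv y') (inv y) by gsimpl.
    by apply: sgM => //; apply: norm_conjV => //; apply: VN.
  move=> g [x [y [-> [hx [hy hxy]]]]].
  exists (inv x), (inv y); split; first by rewrite pinv.
  split; first exact: sgV.
  split; first exact: sgV.
  have -> : inv x ** inv (inv y) = conj (inv (x ** inv y)) x by gsimpl.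
  by apply: norm_conj; [apply: VN | apply: sgV].
move=> g [a [r [[v [v' [hv [hv' ->]]]] [/hR hr ->]]]].
have [vS [vU vc]] := iffLR (Vchar _ _ hU) hv.
have [v'S [v'U v'c]] := iffLR (Vchar _ _ hU) hv'.
move: hr; rewrite (decomp r); set r0 := sect r false; set r1 := sect r true.
move=> /(iffLR (CP_ps _ _ _ _ _)) [h0 [h1 h01]].
have cvr : forall w s, Omega S U w -> S s -> U (comm w s).
  move=> w s /(iffLR (Vchar _ _ hU)) [_ [_ hc]] hs.
  have -> : comm w s = inv (comm s w) by gsimpl.
  by apply: sgV => //; apply: hc.
case: (r [::]).
  rewrite comm_pair1.
  exists (inv v ** conj v' r1), (inv v' ** conj v r0); split => //.
  split; first by apply: sgM; [exact: hV | exact: sgV | apply: V_conjT => //; apply: S_T].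
  split; first by apply: sgM; [exact: hV | exact: sgV | apply: V_conjT => //; apply: S_T].
  have -> : inv v ** conj v' r1 ** inv (inv v' ** conj v r0) =
    conj (comm v' r1 ** inv (comm v r0)) (inv (inv v ** v')) ** ((inv v ** v') ** (inv v ** v')) by gsimpl.
  have hz : Omega S U (inv v ** v') by apply: sgM => //; apply: sgV.
  apply: sgM => //; last by have [_ [? _]] := iffLR (Vchar _ _ hU) hz.
  apply: norm_conjV; first by apply: VN.
  by apply: sgM => //; [apply: cvr | apply: sgV => //; apply: cvr].
rewrite comm_pair0.
exists (comm v r0), (comm v' r1); split => //.
split; first by apply: (U_V hN); apply: cvr.
split; first by apply: (U_V hN); apply: cvr.
by apply: sgM => //; [apply: cvr | apply: sgV => //; apply: cvr].
Qed.

Theorem theorem4p4 (U S : wset) (hUS : normal U S) :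
  let R := prodset (prodset (dprodW U U) sigma_grp) (diagW S) in
  let V := Omega S U in
  let T := setI (normalizer U) (normalizer S) in
  let N := normalizer R in
  seteq N (prodset (prodset (dprodW V V) sigma_grp) (diagW T)) /\
  normal V T /\
  subset (commg (dprodW V V) R) (prodset (dprodW U U) (diagW V)) /\
  quot_module V U T S /\
  (exists A B : wset,
      subgroup A /\ subgroup B /\
      subset R A /\ subset A N /\ subset R B /\ subset B N /\
      seteq (prodset A B) N /\
      quot_iso V U A R /\ quot_iso T S B R).
Proof.
move=> R V T N.
have hN := hUS; have [hU [hS [hUS' hSN]]] := hN.
have hR : seteq R (CP S U) := PS_CP hU hS hUS' hSN.
have hV : subgroup V := V_sg hN.
have hT : subgroup T := @T_sg U S.
have hVT : normal V T := V_normal hN.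
have [_ [_ [VT TNV]]] := hVT.
have hNE : seteq N (CP T V).
  move=> g; split.
    by move/(iffLR (norm_seteq hR g))/(iffLR (NR_CP hN g)).
  by move/(iffRL (NR_CP hN g))/(iffRL (norm_seteq hR g)).
have hRsg : subgroup R := sg_seteq hR (CP_sg hS hU hUS' hSN).
have hNsg : subgroup N := @norm_sg R.
have ST : subset S T := S_T hN.
have UV : subset U V := U_V hN.
have VS : subset V S := V_S hN.
have TNU : subset T (normalizer U) by move=> t [].
split.
  move=> g; split.
    by move/hNE/(iffRL (PS_CP hV hT VT TNV g)).
  by move/(iffLR (PS_CP hV hT VT TNV g))/hNE.
split => //.
split; first exact: comm_claim.
have hUVn : normal U V.
  by split => //; split => //; split => // v /VS /hSN.
have hST : normal S T.
  by split => //; split => //; split => // t [].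
split.
  split => //; split => //; split => //; split => //; split.
    apply: gen_sub => // g [a [b [ha [hb ->]]]].
    by have [_ [_ hc]] := iffLR (Vchar _ _ hU) hb; apply: hc; apply: VS.
  apply: gen_sub => // g [a [b [ha [hb ->]]]].
  by have [_ [_ hc]] := iffLR (Vchar _ _ hU) hb; apply: hc.
have hA : subgroup (CP S V) := CP_sg hS hV VS (fun s hs => TNV s (ST s hs)).
have hB : subgroup (CP T U) := CP_sg hT hU (fun u hu => ST u (hUS' u hu)) TNU.
have RA : subset R (CP S V) by move=> g /hR; apply: CP_sub.
have AN : subset (CP S V) N by move=> g hg; apply/hNE; move: hg; apply: CP_sub.
have RB : subset R (CP T U) by move=> g /hR; apply: CP_sub.
have BN : subset (CP T U) N by move=> g hg; apply/hNE; move: hg; apply: CP_sub.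
exists (CP S V), (CP T U).
do 6 (split => //).
split.
  move=> g; split.
    by case=> a [b [ha [hb ->]]]; apply: (sgM hNsg); [apply: AN | apply: BN].
  move/hNE => [g0 [g1 gV]].
  exists (pairW (sect g false ** inv (sect g true)) one), (pairW (sect g true) (sect g true) ** sig (g [::])).
  split.
    apply: (iffRL (CP_p _ _ _ _)); rewrite inv1 mulg1; split; [|split] => //; [exact: VS | exact: sg1].
  split.
    by apply: (iffRL (CP_ps _ _ _ _ _)); rewrite mulgV; split; [|split] => //; apply: sg1.
  by rewrite [in LHS](decomp g) mulA pmul; gsimpl.
split.
  have hRA : normal R (CP S V) by split => //; split => //; split => //; move=> g /AN.
  apply: (@QI _ _ _ _ (fun x => pairW x one)) => //.
  - move=> x hx; apply: (iffRL (CP_p _ _ _ _)); rewrite inv1 mulg1; split; [|split] => //; [exact: VS | exact: sg1].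
  - by move=> x y; rewrite pmul mulg1.
  - move=> x hx; split.
      by move/hR/(iffLR (CP_p _ _ _ _)) => [_ [_]]; rewrite inv1 mulg1.
    by move=> hx'; apply/hR/(iffRL (CP_p _ _ _ _)); rewrite inv1 mulg1; split; [|split] => //; [exact: VS | exact: sg1].
  move=> y [y0 [y1 yV]].
  exists (sect y false ** inv (sect y true)), (pairW (sect y true) (sect y true) ** sig (y [::])).
  split => //; split.
    by apply/hR/(iffRL (CP_ps _ _ _ _ _)); rewrite mulgV; split; [|split] => //; apply: sg1.
  by rewrite [in LHS](decomp y) mulA pmul; gsimpl.
have hRB : normal R (CP T U) by split => //; split => //; split => //; move=> g /BN.
apply: (@QI _ _ _ _ (fun x => pairW x x)) => //.
- by move=> x hx; apply: (iffRL (CP_p _ _ _ _)); rewrite mulgV; split; [|split] => //; apply: sg1.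
- by move=> x y; rewrite pmul.
- move=> x hx; split.
    by move/hR/(iffLR (CP_p _ _ _ _)) => [].
  by move=> hx'; apply/hR/(iffRL (CP_p _ _ _ _)); rewrite mulgV; split; [|split] => //; apply: sg1.
move=> y [y0 [y1 yU]].
have hu : U (inv (sect y true) ** sect y false).
  have -> : inv (sect y true) ** sect y false = conj (sect y false ** inv (sect y true)) (sect y true) by gsimpl.
  by apply: norm_conj => //; apply: TNU.
exists (sect y true), (pairW (inv (sect y true) ** sect y false) one ** sig (y [::])).
split => //; split.
  by apply/hR/(iffRL (CP_ps _ _ _ _ _)); rewrite inv1 mulg1; split; [|split] => //; [exact: hUS' | exact: sg1].
by rewrite [in LHS](decomp y) mulA pmul; gsimpl.
Qed.
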